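(* Let $\kappa>0$ and consider one of the following reference solutions $t\mapsto e^{i\omega t}U_*$ of the system (H): (i) $\tau=-1$: $U_*=\frac{1}{\sqrt2}(1,-1)$, $\omega=\frac\kappa2-2$ (any $\kappa>0$); (ii) $\tau=+1$ and $0<\kappa<2$: $U_*=\frac{1}{\sqrt2}(1,1)$, $\omega=\frac\kappa2$; (iii) $\kappa>2$ and $\tau\in\{+1,-1\}$: $U_*=(\alpha_\tau,\beta_\tau)$, $\omega=\kappa-1$. Then in each case the reference solution is spectrally stable and orbitally stable.
   Context: Let $\kappa>0$. System (H) is the ODE system for $u=(u_0,u_1):\mathbb R\to\mathbb C^2$: $i u_0'=u_0-u_1-\kappa|u_0|^2u_0$, $\; i u_1'=u_1-u_0-\kappa|u_1|^2u_1$. For $\kappa>2$ and $\tau\in\{\pm1\}$ set $\alpha_\tau=\frac{\sqrt{\kappa+2}-\tau\sqrt{\kappa-2}}{2\sqrt\kappa}$, $\beta_\tau=\frac{\sqrt{\kappa+2}+\tau\sqrt{\kappa-2}}{2\sqrt\kappa}$. For real $U_*=(U_{*0},U_{*1})$ with $|U_{*0}|^2+|U_{*1}|^2=1$ and $\omega$ as listed, $t\mapsto e^{i\omega t}U_*$ solves (H). Linearization: writing $u_j=e^{i\omega t}(U_{*j}+v_j)$ and keeping linear terms gives $i v_j'=(1+\omega-\kappa U_{*j}^2)v_j-v_{1-j}-2\kappa U_{*j}^2\,\mathrm{Re}(v_j)$, $j=0,1$; with $v_j=q_j+ip_j$ this is $X'=\mathbb L X$ for $X=(q_0,p_0,q_1,p_1)\in\mathbb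 R^4$ and a real $4\times4$ matrix $\mathbb L$. The reference solution is spectrally stable if every eigenvalue of $\mathbb L$ has nonpositive real part, spectrally unstable otherwise. The reference solution is orbitally stable if for every $\epsilon>0$ there is $\delta>0$ such that every solution $u$ of (H) with $|u(0)-U_*|\le\delta$ satisfies $\inf_{\theta\in\mathbb R}|u(t)-e^{i\theta}U_*|\le\epsilon$ for all $t\ge0$; orbitally unstable otherwise. *)

(* Defs.v *)
From Stdlib Require Import Reals.
From Coquelicot Require Import Coquelicot.
Open Scope R_scope.

Definition C2 := (C * C)%type.

Definition solves_H (kappa : R) (u : R -> C2) : Prop :=
  exists du0 du1 : R -> C,
    (forall t, is_derive (K := R_AbsRing) (V := C_R_NormedModule)
                 (fun s => fst (u s)) t (du0 t)) /\
    (forall t, is_derive (K := R_AbsRing) (V := C_R_NormedModule)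
                 (fun s => snd (u s)) t (du1 t)) /\
    (forall t, Ci * du0 t =
       fst (u t) - snd (u t) - RtoC kappa * RtoC (Cmod (fst (u t)) ^ 2) * fst (u t))%C /\
    (forall t, Ci * du1 t =
       snd (u t) - fst (u t) - RtoC kappa * RtoC (Cmod (snd (u t)) ^ 2) * snd (u t))%C.

Definition normC2 (w : C2) : R := sqrt (Cmod (fst w) ^ 2 + Cmod (snd w) ^ 2).
Definition subC2 (w w' : C2) : C2 := ((fst w - fst w')%C, (snd w - snd w')%C).

Definition expi (theta : R) : C := (cos theta, sin theta).
Definition rotC2 (theta : R) (U0 U1 : R) : C2 :=
  ((expi theta * RtoC U0)%C, (expi theta * RtoC U1)%C).

Definition orbit_dist (U0 U1 : R) (w : C2) : Rbar :=
  Glb_Rbar (fun x => exists theta : R, x = normC2 (subC2 w (rotC2 theta U0 U1))).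

Definition orbitally_stable (kappa U0 U1 : R) : Prop :=
  forall eps, 0 < eps -> exists delta, 0 < delta /\
    forall u : R -> C2, solves_H kappa u ->
      normC2 (subC2 (u 0) (RtoC U0, RtoC U1)) <= delta ->
      forall t, 0 <= t -> Rbar_le (orbit_dist U0 U1 (u t)) (Finite eps).

(* X = (q0,p0,q1,p1) encoded as a function nat -> R (indices 0..3);
   v_j = q_j + i p_j.  The linearized equation
     i v_j' = (1+omega-kappa U_j^2) v_j - v_{1-j} - 2 kappa U_j^2 Re(v_j)
   gives v_j' = -i * (RHS). *)
Definition lin_rhs_c (kappa omega U0 U1 : R) (X : nat -> R) (j : nat) : C :=
  let v0 : C := (X 0%nat, X 1%nat) in
  let v1 : C := (X 2%nat, X 3%nat) in
  let Uj := if Nat.eqb j 0 then U0 else U1 in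
  let vj := if Nat.eqb j 0 then v0 else v1 in
  let vo := if Nat.eqb j 0 then v1 else v0 in
  (- Ci * (RtoC (1 + omega - kappa * Uj ^ 2) * vj - vo
           - RtoC (2 * kappa * Uj ^ 2 * Re vj)))%C.

Definition lin_rhs (kappa omega U0 U1 : R) (X : nat -> R) (i : nat) : R :=
  match i with
  | 0%nat => Re (lin_rhs_c kappa omega U0 U1 X 0)
  | 1%nat => Im (lin_rhs_c kappa omega U0 U1 X 0)
  | 2%nat => Re (lin_rhs_c kappa omega U0 U1 X 1)
  | _ => Im (lin_rhs_c kappa omega U0 U1 X 1)
  end.

Definition Lmat (kappa omega U0 U1 : R) (i j : nat) : R :=
  lin_rhs kappa omega U0 U1 (fun k => if Nat.eqb k j then 1 else 0) i.

Definition is_eigenvalue4 (M : nat -> nat -> R) (lambda : C) : Prop :=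
  exists v : nat -> C,
    (exists i, (i < 4)%nat /\ v i <> RtoC 0) /\
    forall i, (i < 4)%nat ->
      (RtoC (M i 0%nat) * v 0%nat + RtoC (M i 1%nat) * v 1%nat
       + RtoC (M i 2%nat) * v 2%nat + RtoC (M i 3%nat) * v 3%nat)%C = (lambda * v i)%C.

Definition spectrally_stable (kappa omega U0 U1 : R) : Prop :=
  forall lambda : C, is_eigenvalue4 (Lmat kappa omega U0 U1) lambda -> Re lambda <= 0.

Definition alpha_tau (kappa tau : R) : R :=
  (sqrt (kappa + 2) - tau * sqrt (kappa - 2)) / (2 * sqrt kappa).
Definition beta_tau (kappa tau : R) : R :=
  (sqrt (kappa + 2) + tau * sqrt (kappa - 2)) / (2 * sqrt kappa).

(* Main.v *)
Require Import Defs.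
From Stdlib Require Import Reals Lra Lia Psatz Classical.
From Coquelicot Require Import Coquelicot.
Open Scope R_scope.
Section L.
Variables (k w U0 U1 : R).
Let A0 := 1 + w - k*U0^2.
Let A1 := 1 + w - k*U1^2.
Let B0 := A0 - 2*k*U0^2.
Let B1 := A1 - 2*k*U1^2.
Lemma Lm00 : Lmat k w U0 U1 0 0 = 0. Proof. unfold Lmat, lin_rhs, lin_rhs_c; simpl; ring. Qed.
Lemma Lm01 : Lmat k w U0 U1 0 1 = A0. Proof. unfold Lmat, lin_rhs, lin_rhs_c, A0; simpl; ring. Qed.
Lemma Lm02 : Lmat k w U0 U1 0 2 = 0. Proof. unfold Lmat, lin_rhs, lin_rhs_c; simpl; ring. Qed.
Lemma Lm03 : Lmat k w U0 U1 0 3 = -1. Proof. unfold Lmat, lin_rhs, lin_rhs_c; simpl; ring. Qed.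
Lemma Lm10 : Lmat k w U0 U1 1 0 = - B0. Proof. unfold Lmat, lin_rhs, lin_rhs_c, B0, A0; simpl; ring. Qed.
Lemma Lm11 : Lmat k w U0 U1 1 1 = 0. Proof. unfold Lmat, lin_rhs, lin_rhs_c; simpl; ring. Qed.
Lemma Lm12 : Lmat k w U0 U1 1 2 = 1. Proof. unfold Lmat, lin_rhs, lin_rhs_c; simpl; ring. Qed.
Lemma Lm13 : Lmat k w U0 U1 1 3 = 0. Proof. unfold Lmat, lin_rhs, lin_rhs_c; simpl; ring. Qed.
Lemma Lm20 : Lmat k w U0 U1 2 0 = 0. Proof. unfold Lmat, lin_rhs, lin_rhs_c; simpl; ring. Qed.
Lemma Lm21 : Lmat k w U0 U1 2 1 = -1. Proof. unfold Lmat, lin_rhs, lin_rhs_c; simpl; ring. Qed.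
Lemma Lm22 : Lmat k w U0 U1 2 2 = 0. Proof. unfold Lmat, lin_rhs, lin_rhs_c; simpl; ring. Qed.
Lemma Lm23 : Lmat k w U0 U1 2 3 = A1. Proof. unfold Lmat, lin_rhs, lin_rhs_c, A1; simpl; ring. Qed.
Lemma Lm30 : Lmat k w U0 U1 3 0 = 1. Proof. unfold Lmat, lin_rhs, lin_rhs_c; simpl; ring. Qed.
Lemma Lm31 : Lmat k w U0 U1 3 1 = 0. Proof. unfold Lmat, lin_rhs, lin_rhs_c; simpl; ring. Qed.
Lemma Lm32 : Lmat k w U0 U1 3 2 = - B1. Proof. unfold Lmat, lin_rhs, lin_rhs_c, B1, A1; simpl; ring. Qed.
Lemma Lm33 : Lmat k w U0 U1 3 3 = 0. Proof. unfold Lmat, lin_rhs, lin_rhs_c; simpl; ring. Qed.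
End L.
Lemma Cmult_eq0 (a b : C) : (a * b = 0)%C -> a = 0 \/ b = 0.
Proof. intros H. destruct (classic (a = 0)) as [h|h]; [now left|].
destruct (classic (b = 0)) as [h'|h']; [now right|]. exfalso; exact (Cmult_neq_0 a b h h' H). Qed.

Lemma spec_core (A0 A1 B0 B1 : R) (lam Q0 P0 Q1 P1 : C) :
  A0*A1 = 1 -> 0 <= A0*B0 + A1*B1 + 2 ->
  (RtoC A0 * P0 - P1 = lam*Q0)%C ->
  (- RtoC B0 * Q0 + Q1 = lam*P0)%C ->
  (- P0 + RtoC A1 * P1 = lam*Q1)%C ->
  (Q0 - RtoC B1 * Q1 = lam*P1)%C ->
  (Q0 <> 0 \/ P0 <> 0 \/ Q1 <> 0 \/ P1 <> 0) -> Re lam <= 0.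
Proof.
intros hA hT E1 E2 E3 E4 hnz.
assert (ea : (lam*lam*Q0 = RtoC A0 * (- RtoC B0 * Q0 + Q1) - (Q0 - RtoC B1 * Q1))%C).
{ rewrite E2, E4. replace (lam*lam*Q0)%C with (lam*(lam*Q0))%C by ring. rewrite <- E1. ring. }
assert (eb : (lam*lam*Q1 = - (- RtoC B0 * Q0 + Q1) + RtoC A1 * (Q0 - RtoC B1 * Q1))%C).
{ rewrite E2, E4. replace (lam*lam*Q1)%C with (lam*(lam*Q1))%C by ring. rewrite <- E3. ring. }
set (s := (lam*lam)%C) in *.
set (T := RtoC (-(A0*B0+A1*B1+2))).
assert (hA' : (RtoC A0 * RtoC A1 - 1 = 0)%C).
{ rewrite <- RtoC_mult, hA. ring. }
set (m11 := (- (RtoC A0 * RtoC B0 + 1))%C). set (m12 := (RtoC A0 + RtoC B1)%C).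
set (m21 := (RtoC B0 + RtoC A1)%C). set (m22 := (- (1 + RtoC A1 * RtoC B1))%C).
assert (ea' : (s*Q0 - (m11*Q0 + m12*Q1) = 0)%C) by (rewrite ea; unfold m11, m12; ring).
assert (eb' : (s*Q1 - (m21*Q0 + m22*Q1) = 0)%C) by (rewrite eb; unfold m21, m22; ring).
assert (d0 : (s*(s - T)*Q0 = 0)%C).
{ transitivity ((s - m22)*(s*Q0 - (m11*Q0 + m12*Q1)) + m12*(s*Q1 - (m21*Q0 + m22*Q1))
     - (RtoC A0 * RtoC A1 - 1) * (RtoC B0 * RtoC B1 - 1) * Q0)%C.
  - unfold T, m11, m12, m21, m22. rewrite !RtoC_opp, !RtoC_plus, !RtoC_mult. ring.
  - rewrite ea', eb', hA'. ring. }
assert (d1 : (s*(s - T)*Q1 = 0)%C).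
{ transitivity ((s - m11)*(s*Q1 - (m21*Q0 + m22*Q1)) + m21*(s*Q0 - (m11*Q0 + m12*Q1))
     - (RtoC A0 * RtoC A1 - 1) * (RtoC B0 * RtoC B1 - 1) * Q1)%C.
  - unfold T, m11, m12, m21, m22. rewrite !RtoC_opp, !RtoC_plus, !RtoC_mult. ring.
  - rewrite ea', eb', hA'. ring. }
assert (key : s = 0 \/ s = T \/ lam = 0).
{ destruct (classic (Q0 = 0)) as [q0|q0]; destruct (classic (Q1 = 0)) as [q1|q1].
  - right; right. subst Q0 Q1.
    assert (h2 : (lam*P0 = 0)%C) by (rewrite <- E2; ring).
    assert (h4 : (lam*P1 = 0)%C) by (rewrite <- E4; ring).
    destruct hnz as [h|[h|[h|h]]]; try (exfalso; now apply h).
    + destruct (Cmult_eq0 _ _ h2) as [e|e]; [exact e| exfalso; now apply h].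
    + destruct (Cmult_eq0 _ _ h4) as [e|e]; [exact e| exfalso; now apply h].
  - destruct (Cmult_eq0 _ _ d1) as [e|e]; [|exfalso; now apply q1].
    destruct (Cmult_eq0 _ _ e) as [e'|e']; [now left|right;left].
    replace s with (s - T + T)%C by ring. rewrite e'. ring.
  - destruct (Cmult_eq0 _ _ d0) as [e|e]; [|exfalso; now apply q0].
    destruct (Cmult_eq0 _ _ e) as [e'|e']; [now left|right;left].
    replace s with (s - T + T)%C by ring. rewrite e'. ring.
  - destruct (Cmult_eq0 _ _ d0) as [e|e]; [|exfalso; now apply q0].
    destruct (Cmult_eq0 _ _ e) as [e'|e']; [now left|right;left].
    replace s with (s - T + T)%C by ring. rewrite e'. ring. }
unfold s, T in key. destruct lam as [a b]. simpl.
destruct key as [e|[e|e]].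
- pose proof (f_equal fst e) as e1; pose proof (f_equal snd e) as e2; unfold Cmult in e1, e2; simpl in e1, e2. clear -e1 e2. assert (hb : a*b = 0) by lra. assert (h4 : (a*a)*(a*a) = 0) by (replace (a*a) with (b*b) at 2 by lra; replace ((a*a)*(b*b)) with ((a*b)*(a*b)) by ring; rewrite hb; ring). apply Rmult_integral in h4; destruct h4 as [h|h]; apply Rmult_integral in h; lra.
- pose proof (f_equal fst e) as e1; pose proof (f_equal snd e) as e2; unfold Cmult in e1, e2; simpl in e1, e2. clear -e1 e2 hT. assert (hb : a*b = 0) by lra. destruct (Rle_or_lt a 0) as [h|h]; [exact h|]. exfalso. assert (b = 0) by (apply (Rmult_eq_reg_l a); [rewrite hb; ring| lra]). subst b. nra.
- apply (f_equal fst) in e; simpl in e; lra.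
Qed.
Lemma re_deriv (f : R -> C) t l : is_derive (K:=R_AbsRing) (V:=C_R_NormedModule) f t l -> is_derive (fun s => fst (f s)) t (fst l).
Proof. unfold is_derive. intros H. eapply filterdiff_ext_lin.
apply (filterdiff_comp f fst). exact H. apply filterdiff_linear, is_linear_fst. simpl. intros; reflexivity. Qed.

Lemma im_deriv (f : R -> C) t l : is_derive (K:=R_AbsRing) (V:=C_R_NormedModule) f t l -> is_derive (fun s => snd (f s)) t (snd l).
Proof. unfold is_derive. intros H. eapply filterdiff_ext_lin.
apply (filterdiff_comp f snd). exact H. apply filterdiff_linear, is_linear_snd. simpl. intros; reflexivity. Qed.

Lemma comp_eq (z w du : C) (k : R) : (Ci * du = z - w - RtoC k * RtoC (Cmod z ^ 2) * z)%C ->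
  fst du = snd z - snd w - k*(fst z^2+snd z^2)*snd z /\
  snd du = -(fst z - fst w - k*(fst z^2+snd z^2)*fst z).
Proof. rewrite Cmod2_alt. destruct z as [z1 z2], w as [w1 w2], du as [x y]. simpl.
intros H. pose proof (f_equal fst H) as e1; pose proof (f_equal snd H) as e2.
unfold Cmult, Cminus, Cplus, Copp, Ci, RtoC in e1, e2; simpl in e1, e2. split; nra. Qed.

Lemma deriv_cont (f : R -> R) (df : R -> R) : (forall t, is_derive f t (df t)) -> forall t, continuity_pt f t.
Proof. intros H t. apply continuity_pt_filterlim. exact (@ex_derive_continuous R_AbsRing R_NormedModule f t (ex_intro _ (df t) (H t))). Qed.

Lemma const_of_deriv0 (f : R -> R) : (forall t, is_derive f t 0) -> forall t, f t = f 0.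
Proof. intros H t.
destruct (MVT_gen f 0 t (fun _ => 0)) as [c [_ hc]].
- intros; apply H.
- intros; apply (deriv_cont f (fun _ => 0) H).
- lra. Qed.

Section Cons.
Variables (k : R) (a b c d da db dc dd : R -> R).
Hypotheses (Ha : forall t, is_derive a t (da t)) (Hb : forall t, is_derive b t (db t))
  (Hc : forall t, is_derive c t (dc t)) (Hd : forall t, is_derive d t (dd t))
  (Ea : forall t, da t = b t - d t - k*(a t^2+b t^2)*b t)
  (Eb : forall t, db t = -(a t - c t - k*(a t^2+b t^2)*a t))
  (Ec : forall t, dc t = d t - b t - k*(c t^2+d t^2)*d t)
  (Ed : forall t, dd t = -(c t - a t - k*(c t^2+d t^2)*c t)).

Ltac subst_der t := 
  replace (Derive (fun x => a x) t) with (da t) by (symmetry; apply is_derive_unique, Ha);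
  replace (Derive (fun x => b x) t) with (db t) by (symmetry; apply is_derive_unique, Hb);
  replace (Derive (fun x => c x) t) with (dc t) by (symmetry; apply is_derive_unique, Hc);
  replace (Derive (fun x => d x) t) with (dd t) by (symmetry; apply is_derive_unique, Hd);
  rewrite Ea, Eb, Ec, Ed; ring.

Lemma consN : forall t, a t^2 + b t^2 + c t^2 + d t^2 = a 0^2 + b 0^2 + c 0^2 + d 0^2.
Proof. apply (const_of_deriv0 (fun t => a t^2 + b t^2 + c t^2 + d t^2)).
intros t. auto_derive.
- repeat split; eexists; eauto.
- subst_der t. Qed.

Lemma consG : forall t, 2*(a t*c t + b t*d t) + k/2*((a t^2+b t^2)^2 + (c t^2+d t^2)^2)
  = 2*(a 0*c 0 + b 0*d 0) + k/2*((a 0^2+b 0^2)^2 + (c 0^2+d 0^2)^2).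
Proof. apply (const_of_deriv0 (fun t => 2*(a t*c t + b t*d t) + k/2*((a t^2+b t^2)^2 + (c t^2+d t^2)^2))).
intros t. auto_derive.
- repeat split; eexists; eauto.
- replace (Derive (fun x => a x) t) with (da t) by (symmetry; apply is_derive_unique, Ha);
  replace (Derive (fun x => b x) t) with (db t) by (symmetry; apply is_derive_unique, Hb);
  replace (Derive (fun x => c x) t) with (dc t) by (symmetry; apply is_derive_unique, Hc);
  replace (Derive (fun x => d x) t) with (dd t) by (symmetry; apply is_derive_unique, Hd);
  rewrite Ea, Eb, Ec, Ed. field. Qed.

Lemma contX : forall t, continuity_pt (fun t => a t^2 + b t^2 - c t^2 - d t^2) t.
Proof. apply (deriv_cont _ (fun t => 2*a t*da t + 2*b t*db t - 2*c t*dc t - 2*d t*dd t)).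
intros t. auto_derive.
- repeat split; eexists; eauto.
- replace (Derive (fun x => a x) t) with (da t) by (symmetry; apply is_derive_unique, Ha);
  replace (Derive (fun x => b x) t) with (db t) by (symmetry; apply is_derive_unique, Hb);
  replace (Derive (fun x => c x) t) with (dc t) by (symmetry; apply is_derive_unique, Hc);
  replace (Derive (fun x => d x) t) with (dd t) by (symmetry; apply is_derive_unique, Hd). ring. Qed.
End Cons.
Lemma theta_ex (p q : R) : exists th, p * cos th + q * sin th = sqrt (p^2 + q^2).
Proof.
destruct (Req_dec (p^2+q^2) 0) as [h|h].
- exists 0. rewrite h, sqrt_0. assert (p = 0) by nra. assert (q = 0) by nra. subst; ring.
- set (m := sqrt (p^2+q^2)).
  assert (hm : 0 < m) by (apply sqrt_lt_R0; nra).
  assert (hm2 : m*m = p^2+q^2) by (apply sqrt_sqrt; nra).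
  assert (hc : -1 <= p/m <= 1).
  { split; [apply (Rmult_le_reg_r m); [lra|]; unfold Rdiv; rewrite Rmult_assoc, Rinv_l by lra; nra
           |apply (Rmult_le_reg_r m); [lra|]; unfold Rdiv; rewrite Rmult_assoc, Rinv_l by lra; nra]. }
  assert (hs : sqrt (1 - (p/m)²) = Rabs q / m).
  { replace (1 - (p/m)²) with ((q/m)²).
    2:{ unfold Rsqr. replace (q/m*(q/m)) with ((q*q)/(m*m)) by (field; lra).
        replace (p/m*(p/m)) with ((p*p)/(m*m)) by (field; lra).
        rewrite hm2. field. nra. }
    rewrite sqrt_Rsqr_abs. unfold Rdiv. rewrite Rabs_mult, Rabs_inv, (Rabs_right m) by lra. reflexivity. }
  destruct (Rle_or_lt 0 q) as [hq|hq].
  + exists (acos (p/m)). rewrite cos_acos, sin_acos, hs by exact hc. rewrite Rabs_right by lra.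
    apply (Rmult_eq_reg_r m); [|lra]. field_simplify; [|lra]. nra.
  + exists (- acos (p/m)). rewrite cos_neg, sin_neg, cos_acos, sin_acos, hs by exact hc.
    rewrite Rabs_left by lra.
    apply (Rmult_eq_reg_r m); [|lra]. field_simplify; [|lra]. nra.
Qed.

Lemma abs_of_sq (x r : R) : 0 <= r -> x^2 <= r^2 -> Rabs x <= r.
Proof. intros hr h. destruct (Rle_or_lt (Rabs x) r) as [e|e]; [exact e|].
exfalso. assert (Rabs x ^2 = x^2) by (rewrite RPow_abs; apply Rabs_right; nra).
assert (0 <= Rabs x) by apply Rabs_pos. nra. Qed.

Lemma dist_bound (U0 U1 a b c d r e : R) : U0^2+U1^2=1 -> 0 <= r -> 0 <= e -> 4*r <= e^2 ->
  let N := a^2+b^2+c^2+d^2 in let X := a^2+b^2-c^2-d^2 in let Y := 2*(a*c+b*d) in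
  Rabs (N - 1) <= r -> Rabs (X - (U0^2-U1^2)) <= r -> Rabs (Y - 2*U0*U1) <= r ->
  exists th, normC2 (subC2 ((a,b),(c,d)) (rotC2 th U0 U1)) <= e.
Proof.
intros hU hr he her N X Y hN hX hY.
set (p := a*U0 + c*U1). set (q := b*U0 + d*U1).
destruct (theta_ex p q) as [th hth]. exists th.
set (m := sqrt (p^2+q^2)).
assert (hm0 : 0 <= m) by apply sqrt_pos.
assert (hm2 : m*m = p^2+q^2) by (apply sqrt_sqrt; nra).
assert (hw : p^2+q^2 = (N + X*(U0^2-U1^2) + Y*(2*U0*U1))/2).
{ transitivity ((N + X*(U0^2-U1^2) + Y*(2*U0*U1))/2 - N*(1 - (U0^2+U1^2))/2).
  - unfold p, q, N, X, Y. field.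
  - rewrite hU. field. }
assert (hXs : Rabs (U0^2-U1^2) <= 1).
{ apply abs_of_sq; [lra|]. replace ((U0^2-U1^2)^2) with ((U0^2+U1^2)^2 - 4*(U0*U1)^2) by ring. rewrite hU. clear. assert (0 <= (U0*U1)^2) by apply pow2_ge_0. lra. }
assert (hYs : Rabs (2*U0*U1) <= 1).
{ apply abs_of_sq; [lra|]. replace ((2*U0*U1)^2) with ((U0^2+U1^2)^2 - (U0^2-U1^2)^2) by ring. rewrite hU. clear. assert (0 <= (U0^2-U1^2)^2) by apply pow2_ge_0. lra. }
assert (hlow : N + X*(U0^2-U1^2) + Y*(2*U0*U1) >= 2 - 3*r).
{ apply Rabs_le_between in hN; apply Rabs_le_between in hX; apply Rabs_le_between in hY.
  apply Rabs_le_between in hXs; apply Rabs_le_between in hYs.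
  assert (hxx : X*(U0^2-U1^2) >= (U0^2-U1^2)^2 - r).
  { replace (X*(U0^2-U1^2)) with ((U0^2-U1^2)^2 + (X - (U0^2-U1^2))*(U0^2-U1^2)) by ring.
    assert (Rabs ((X - (U0^2-U1^2))*(U0^2-U1^2)) <= r * 1).
    { rewrite Rabs_mult. apply Rmult_le_compat; try apply Rabs_pos; try lra.
      apply Rabs_le_between; lra. apply Rabs_le_between; lra. }
    apply Rabs_le_between in H. lra. }
  assert (hyy : Y*(2*U0*U1) >= (2*U0*U1)^2 - r).
  { replace (Y*(2*U0*U1)) with ((2*U0*U1)^2 + (Y - 2*U0*U1)*(2*U0*U1)) by ring.
    assert (Rabs ((Y - 2*U0*U1)*(2*U0*U1)) <= r * 1).
    { rewrite Rabs_mult. apply Rmult_le_compat; try apply Rabs_pos; try lra.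
      apply Rabs_le_between; lra. apply Rabs_le_between; lra. }
    apply Rabs_le_between in H. lra. }
  assert ((U0^2-U1^2)^2 + (2*U0*U1)^2 = 1).
  { replace ((U0^2-U1^2)^2 + (2*U0*U1)^2) with ((U0^2+U1^2)^2) by ring. rewrite hU. ring. }
  lra. }
assert (hmlow : m >= 1 - 3*r/2).
{ destruct (Rle_or_lt 1 m) as [h|h]; [lra|]. assert (m*m <= m) by nra. lra. }
assert (hsum : Cmod (fst (subC2 ((a,b),(c,d)) (rotC2 th U0 U1)))^2 + Cmod (snd (subC2 ((a,b),(c,d)) (rotC2 th U0 U1)))^2
   = N + 1 - 2*m).
{ rewrite !Cmod2_alt. unfold subC2, rotC2, expi; simpl. unfold m. rewrite <- hth.
  assert (hsc : cos th ^2 + sin th ^2 = 1).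
  { pose proof (sin2_cos2 th) as h. unfold Rsqr in h. lra. }
  transitivity (N + (cos th ^2 + sin th ^2)*(U0^2+U1^2) - 2*(p * cos th + q * sin th)).
  - unfold N, p, q. ring.
  - rewrite hsc, hU. ring. }
unfold normC2. rewrite hsum.
rewrite <- (sqrt_pow2 e he). apply sqrt_le_1_alt.
apply Rabs_le_between in hN. lra.
Qed.

Definition core_prop (kappa U0 U1 : R) :=
  forall r, 0 < r -> exists rho, 0 < rho /\ forall N0 x0 y0 x y,
   Rabs (N0-1) <= rho -> Rabs (x0 - (U0^2-U1^2)) <= rho -> Rabs (y0 - 2*U0*U1) <= rho ->
   x^2 + y^2 <= N0^2 -> y + kappa*x^2/4 = y0 + kappa*x0^2/4 ->
   (x <> 0 \/ U0^2-U1^2 = 0) /\ 0 <= x0*(U0^2-U1^2) /\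
   (0 <= x*(U0^2-U1^2) -> Rabs (N0-1) <= r /\ Rabs (x - (U0^2-U1^2)) <= r /\ Rabs (y - 2*U0*U1) <= r).

Lemma init_bound (U0 U1 e1 e2 e3 e4 del : R) : U0^2+U1^2 = 1 -> 0 <= del <= 1 ->
  e1^2+e2^2+e3^2+e4^2 <= del^2 ->
  let a := U0 + e1 in let b := e2 in let c := U1 + e3 in let d := e4 in
  Rabs (a^2+b^2+c^2+d^2 - 1) <= 3*del /\
  Rabs (a^2+b^2-c^2-d^2 - (U0^2-U1^2)) <= 3*del /\
  Rabs (2*(a*c+b*d) - 2*U0*U1) <= 3*del.
Proof.
intros hU hd hs a b c d.
assert (h1 : Rabs (2*U0*e1 + 2*U1*e3) <= 2*del).
{ apply abs_of_sq; [lra|].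
  assert ((2*U0*e1 + 2*U1*e3)^2 <= 4*(U0^2+U1^2)*(e1^2+e3^2)).
  { assert (0 <= (U0*e3 - U1*e1)^2) by apply pow2_ge_0. nra. }
  rewrite hU in H. assert (0 <= e2^2) by apply pow2_ge_0. assert (0 <= e4^2) by apply pow2_ge_0. nra. }
assert (h2 : Rabs (2*U0*e1 - 2*U1*e3) <= 2*del).
{ apply abs_of_sq; [lra|].
  assert ((2*U0*e1 - 2*U1*e3)^2 <= 4*(U0^2+U1^2)*(e1^2+e3^2)).
  { assert (0 <= (U0*e3 + U1*e1)^2) by apply pow2_ge_0. nra. }
  rewrite hU in H. assert (0 <= e2^2) by apply pow2_ge_0. assert (0 <= e4^2) by apply pow2_ge_0. nra. }
assert (h3 : Rabs (2*U0*e3 + 2*U1*e1) <= 2*del).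
{ apply abs_of_sq; [lra|].
  assert ((2*U0*e3 + 2*U1*e1)^2 <= 4*(U0^2+U1^2)*(e1^2+e3^2)).
  { assert (0 <= (U0*e1 - U1*e3)^2) by apply pow2_ge_0. nra. }
  rewrite hU in H. assert (0 <= e2^2) by apply pow2_ge_0. assert (0 <= e4^2) by apply pow2_ge_0. nra. }
assert (hsq : del^2 <= del) by nra.
assert (0 <= e1^2) by apply pow2_ge_0. assert (0 <= e2^2) by apply pow2_ge_0.
assert (0 <= e3^2) by apply pow2_ge_0. assert (0 <= e4^2) by apply pow2_ge_0.
apply Rabs_le_between in h1; apply Rabs_le_between in h2; apply Rabs_le_between in h3.
unfold a, b, c, d. repeat split; apply Rabs_le_between.
- replace ((U0 + e1) ^ 2 + e2 ^ 2 + (U1 + e3) ^ 2 + e4 ^ 2 - 1) with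
    (2*U0*e1 + 2*U1*e3 + (e1^2+e2^2+e3^2+e4^2)) by (rewrite <- hU; ring). lra.
- replace ((U0 + e1) ^ 2 + e2 ^ 2 - (U1 + e3) ^ 2 - e4 ^ 2 - (U0 ^ 2 - U1 ^ 2)) with
    (2*U0*e1 - 2*U1*e3 + (e1^2+e2^2-e3^2-e4^2)) by ring. lra.
- replace (2 * ((U0 + e1) * (U1 + e3) + e2 * e4) - 2 * U0 * U1) with
    (2*U0*e3 + 2*U1*e1 + 2*(e1*e3+e2*e4)) by ring.
  assert (Rabs (2*(e1*e3+e2*e4)) <= e1^2+e2^2+e3^2+e4^2).
  { apply Rabs_le. assert (0 <= (e1-e3)^2) by apply pow2_ge_0. assert (0 <= (e2-e4)^2) by apply pow2_ge_0.
    assert (0 <= (e1+e3)^2) by apply pow2_ge_0. assert (0 <= (e2+e4)^2) by apply pow2_ge_0. split; nra. }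
  apply Rabs_le_between in H3. lra.
Qed.

Lemma normC2_sub_real (z0 z1 : C) U0 U1 : normC2 (subC2 (z0,z1) (RtoC U0, RtoC U1)) = sqrt ((fst z0 - U0)^2 + snd z0^2 + (fst z1 - U1)^2 + snd z1^2).
Proof. unfold normC2, subC2. rewrite !Cmod2_alt. destruct z0, z1. unfold Re, Im, RtoC; simpl. f_equal. ring. Qed.

Lemma orb_generic (kappa U0 U1 : R) : U0^2 + U1^2 = 1 -> core_prop kappa U0 U1 ->
  orbitally_stable kappa U0 U1.
Proof.
intros hU core eps heps.
destruct (core (eps^2/4)) as [rho [hrho Hc]]. { nra. }
exists (Rmin 1 (rho/3)). split. { apply Rmin_glb_lt; lra. }
intros u [du0 [du1 [Hd0 [Hd1 [E0 E1]]]]] H0 t ht.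
set (a := fun s => fst (fst (u s))). set (b := fun s => snd (fst (u s))).
set (c := fun s => fst (snd (u s))). set (d := fun s => snd (snd (u s))).
assert (Ha : forall s, is_derive a s (fst (du0 s))) by (intro s; apply (re_deriv (fun s => fst (u s))), Hd0).
assert (Hb : forall s, is_derive b s (snd (du0 s))) by (intro s; apply (im_deriv (fun s => fst (u s))), Hd0).
assert (Hc' : forall s, is_derive c s (fst (du1 s))) by (intro s; apply (re_deriv (fun s => snd (u s))), Hd1).
assert (Hd' : forall s, is_derive d s (snd (du1 s))) by (intro s; apply (im_deriv (fun s => snd (u s))), Hd1).
assert (Ea : forall s, fst (du0 s) = b s - d s - kappa*(a s^2+b s^2)*b s) by (intro s; apply (comp_eq _ _ _ _ (E0 s))).
assert (Eb : forall s, snd (du0 s) = -(a s - c s - kappa*(a s^2+b s^2)*a s)) by (intro s; apply (comp_eq _ _ _ _ (E0 s))).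
assert (Ec : forall s, fst (du1 s) = d s - b s - kappa*(c s^2+d s^2)*d s) by (intro s; apply (comp_eq _ _ _ _ (E1 s))).
assert (Ed : forall s, snd (du1 s) = -(c s - a s - kappa*(c s^2+d s^2)*c s)) by (intro s; apply (comp_eq _ _ _ _ (E1 s))).
pose proof (consN kappa a b c d _ _ _ _ Ha Hb Hc' Hd' Ea Eb Ec Ed) as CN.
pose proof (consG kappa a b c d _ _ _ _ Ha Hb Hc' Hd' Ea Eb Ec Ed) as CG.
pose proof (contX a b c d _ _ _ _ Ha Hb Hc' Hd') as CX.
set (Nf := fun s => a s^2 + b s^2 + c s^2 + d s^2).
set (Xf := fun s => a s^2 + b s^2 - c s^2 - d s^2).
set (Yf := fun s => 2*(a s*c s + b s*d s)).
set (del := Rmin 1 (rho/3)).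
assert (hdel : 0 <= del <= 1). { unfold del; split; [apply Rmin_glb; lra| apply Rmin_l]. }
assert (hdel3 : 3*del <= rho). { unfold del. pose proof (Rmin_r 1 (rho/3)). lra. }
assert (hinit : Rabs (Nf 0 - 1) <= 3*del /\ Rabs (Xf 0 - (U0^2-U1^2)) <= 3*del /\ Rabs (Yf 0 - 2*U0*U1) <= 3*del).
{ assert (hs : (a 0 - U0)^2 + b 0^2 + (c 0 - U1)^2 + d 0^2 <= del^2).
  { rewrite (surjective_pairing (u 0)), normC2_sub_real in H0.
    change (fst (fst (u 0))) with (a 0) in H0. change (snd (fst (u 0))) with (b 0) in H0.
    change (fst (snd (u 0))) with (c 0) in H0. change (snd (snd (u 0))) with (d 0) in H0.
    fold del in H0.
    assert (hpos : 0 <= (a 0 - U0)^2 + b 0^2 + (c 0 - U1)^2 + d 0^2).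
    { assert (0 <= (a 0 - U0)^2) by apply pow2_ge_0. assert (0 <= b 0^2) by apply pow2_ge_0.
      assert (0 <= (c 0 - U1)^2) by apply pow2_ge_0. assert (0 <= d 0^2) by apply pow2_ge_0. lra. }
    rewrite <- (sqrt_sqrt _ hpos). replace (del^2) with (del*del) by ring.
    assert (0 <= sqrt ((a 0 - U0)^2 + b 0^2 + (c 0 - U1)^2 + d 0^2)) by apply sqrt_pos.
    apply Rmult_le_compat; lra. }
  pose proof (init_bound U0 U1 (a 0 - U0) (b 0) (c 0 - U1) (d 0) del hU hdel hs) as hb.
  simpl in hb. unfold Nf, Xf, Yf.
  replace (U0 + (a 0 - U0)) with (a 0) in hb by ring.
  replace (U1 + (c 0 - U1)) with (c 0) in hb by ring. exact hb. }
destruct hinit as [i1 [i2 i3]].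
assert (Hcs : forall s, (Xf s <> 0 \/ U0^2-U1^2 = 0) /\ 0 <= Xf 0*(U0^2-U1^2) /\
   (0 <= Xf s*(U0^2-U1^2) -> Rabs (Nf 0-1) <= eps^2/4 /\ Rabs (Xf s - (U0^2-U1^2)) <= eps^2/4 /\ Rabs (Yf s - 2*U0*U1) <= eps^2/4)).
{ intro s. apply (Hc (Nf 0) (Xf 0) (Yf 0) (Xf s) (Yf s)); try lra.
  - replace (Nf 0) with (Nf s) by (unfold Nf; apply CN).
    unfold Nf, Xf, Yf. assert (0 <= (b s * c s - a s * d s)^2) by apply pow2_ge_0. nra.
  - assert (hg := CG s).
    unfold Nf in CN. pose proof (CN s) as hn.
    unfold Xf, Yf.
    assert (forall s, 2 * (a s * c s + b s * d s) + kappa * (a s ^ 2 + b s ^ 2 - c s ^ 2 - d s ^ 2) ^ 2 / 4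
       = (2 * (a s * c s + b s * d s) + kappa / 2 * ((a s ^ 2 + b s ^ 2) ^ 2 + (c s ^ 2 + d s ^ 2) ^ 2))
         - kappa * (a s ^ 2 + b s ^ 2 + c s ^ 2 + d s ^ 2)^2/4) by (intro; field).
    rewrite !H, hg, hn. reflexivity. }
assert (hsign : 0 <= Xf t * (U0^2-U1^2)).
{ destruct (Hcs t) as [[hx|hx] [h0 _]]; [|rewrite hx; lra].
  destruct (Rle_or_lt 0 (Xf t * (U0^2-U1^2))) as [h|h]; [exact h|exfalso].
  destruct (Hcs 0) as [[hx0|hx0] _]; [|rewrite hx0 in h; lra].
  assert (hc : continuity Xf) by (intro s; apply CX).
  destruct (IVT_gen Xf 0 t 0 hc) as [z [_ hz]].
  - unfold Rmin, Rmax. destruct (Rle_dec (Xf 0) (Xf t)) as [q|q].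
    + split.
      * destruct (Rle_or_lt (Xf 0) 0); [lra|]. exfalso. nra.
      * destruct (Rle_or_lt 0 (Xf t)); [lra|]. exfalso. nra.
    + split.
      * destruct (Rle_or_lt (Xf t) 0); [lra|]. exfalso. nra.
      * destruct (Rle_or_lt 0 (Xf 0)); [lra|]. exfalso. nra.
  - destruct (Hcs z) as [[hz'|hz'] _]; [exact (hz' hz)|]. rewrite hz' in h. lra. }
destruct (Hcs t) as [_ [_ hcl]]. destruct (hcl hsign) as [c1 [c2 c3]].
assert (hNt : Rabs (Nf t - 1) <= eps^2/4) by (replace (Nf t) with (Nf 0) by (symmetry; apply CN); exact c1).
destruct (dist_bound U0 U1 (a t) (b t) (c t) (d t) (eps^2/4) eps hU) as [th hth]; try lra; try nra.
- exact hNt.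
- exact c2.
- exact c3.
- unfold orbit_dist. 
  destruct (Glb_Rbar_correct (fun x => exists theta : R, x = normC2 (subC2 (u t) (rotC2 theta U0 U1)))) as [hlb _].
  eapply Rbar_le_trans. apply hlb. exists th. reflexivity.
  simpl. replace (u t) with ((a t, b t), (c t, d t)). exact hth.
  unfold a, b, c, d. destruct (u t) as [[] []]. reflexivity.
Qed.
Lemma sq_of_abs (x r : R) : Rabs x <= r -> x^2 <= r^2.
Proof. intros h. apply Rabs_le_between in h. nra. Qed.
Definition core' (kappa Xs Ys : R) :=
  forall r, 0 < r -> exists rho, 0 < rho /\ forall N0 x0 y0 x y,
   Rabs (N0-1) <= rho -> Rabs (x0 - Xs) <= rho -> Rabs (y0 - Ys) <= rho ->
   x^2 + y^2 <= N0^2 -> y + kappa*x^2/4 = y0 + kappa*x0^2/4 ->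
   (x <> 0 \/ Xs = 0) /\ 0 <= x0*Xs /\
   (0 <= x*Xs -> Rabs (N0-1) <= r /\ Rabs (x - Xs) <= r /\ Rabs (y - Ys) <= r).

Lemma core_i (k : R) : 0 < k -> core' k 0 (-1).
Proof.
intros hk r hr.
set (rho := Rmin (Rmin 1 (r/(1+k))) (k*r^2/(8+k))).
assert (h1 : rho <= 1) by (unfold rho; pose proof (Rmin_l (Rmin 1 (r/(1+k))) (k*r^2/(8+k))); pose proof (Rmin_l 1 (r/(1+k))); lra).
assert (h2 : rho*(1+k) <= r).
{ unfold rho. pose proof (Rmin_l (Rmin 1 (r/(1+k))) (k*r^2/(8+k))); pose proof (Rmin_r 1 (r/(1+k))).
  assert (rho <= r/(1+k)) by (unfold rho; lra).
  apply (Rmult_le_compat_r (1+k)) in H1; [|lra]. unfold rho in H1. field_simplify in H1; lra. }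
assert (h3 : rho*(8+k) <= k*r^2).
{ pose proof (Rmin_r (Rmin 1 (r/(1+k))) (k*r^2/(8+k))).
  apply (Rmult_le_compat_r (8+k)) in H; [|lra]. fold rho in H. field_simplify in H; lra. }
assert (hp : 0 < rho).
{ unfold rho. apply Rmin_glb_lt; [apply Rmin_glb_lt|]; try lra.
  apply Rdiv_lt_0_compat; lra. apply Rdiv_lt_0_compat; [|lra]. apply Rmult_lt_0_compat; nra. }
exists rho. split; [exact hp|].
intros N0 x0 y0 x y hN hx hy hc hf.
split; [right; reflexivity|]. split; [lra|]. intros _.
pose proof (sq_of_abs _ _ hx) as hx2. replace (x0 - 0) with x0 in hx2 by ring.
apply Rabs_le_between in hN. apply Rabs_le_between in hy.
assert (hx0 : 0 <= x^2) by apply pow2_ge_0.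
assert (hyN : - N0 <= y).
{ destruct (Rle_or_lt (-N0) y) as [e|e]; [exact e|]. exfalso. nra. }
assert (hf0 : y0 + k*x0^2/4 <= -1 + rho + k*rho/4).
{ assert (k*x0^2 <= k*rho) by (apply Rmult_le_compat_l; nra). lra. }
assert (hxx : k * x^2 <= k * r^2) by lra.
assert (hxr : x^2 <= r^2) by (apply (Rmult_le_reg_l k); lra).
repeat split.
- apply Rabs_le_between; nra.
- apply abs_of_sq; [lra|]. replace (x - 0) with x by ring. exact hxr.
- apply Rabs_le_between. split; nra.
Qed.

Lemma two_N_y (N x y : R) : 0 <= N -> x^2 + y^2 <= N^2 -> 2*N*y <= 2*N^2 - x^2.
Proof. intros hN h.
destruct (Rle_or_lt y 0) as [e|e].
- assert (0 <= x^2) by apply pow2_ge_0. nra.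
- assert (hpos : 0 <= 2*N^2 - x^2) by (assert (0 <= y^2) by apply pow2_ge_0; nra).
  assert ((2*N*y)^2 <= (2*N^2 - x^2)^2).
  { assert (0 <= x^4) by (replace (x^4) with ((x^2)^2) by ring; apply pow2_ge_0).
    assert (0 <= N^2) by apply pow2_ge_0. nra. }
  assert (0 <= 2*N*y) by nra.
  apply Rsqr_incr_0_var. unfold Rsqr; nra. exact hpos. Qed.

Lemma core_ii (k : R) : 0 < k -> k < 2 -> core' k 0 1.
Proof.
intros hk hk2 r hr.
set (D := 2 - k).
assert (hD : 0 < D) by (unfold D; lra).
set (rho := Rmin (Rmin 1 (D/4)) (Rmin (r*D/16) (r^2*D/32))).
assert (hp : 0 < rho).
{ unfold rho. repeat apply Rmin_glb_lt; try lra; apply Rdiv_lt_0_compat; try lra; try nra.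
  apply Rmult_lt_0_compat; nra. }
assert (h1 : rho <= 1 /\ rho <= D/4 /\ rho <= r*D/16 /\ rho <= r^2*D/32).
{ unfold rho. pose proof (Rmin_l (Rmin 1 (D/4)) (Rmin (r*D/16) (r^2*D/32))).
  pose proof (Rmin_r (Rmin 1 (D/4)) (Rmin (r*D/16) (r^2*D/32))).
  pose proof (Rmin_l 1 (D/4)). pose proof (Rmin_r 1 (D/4)).
  pose proof (Rmin_l (r*D/16) (r^2*D/32)). pose proof (Rmin_r (r*D/16) (r^2*D/32)). lra. }
destruct h1 as [h1 [h2 [h3 h4]]].
exists rho. split; [exact hp|].
intros N0 x0 y0 x y hN hx hy hc hf.
split; [right; reflexivity|]. split; [lra|]. intros _.
apply Rabs_le_between in hN. apply Rabs_le_between in hy.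
assert (hx0 : 0 <= x0^2) by apply pow2_ge_0.
assert (hxx : 0 <= x^2) by apply pow2_ge_0.
assert (hN0 : 0 <= N0) by lra.
pose proof (two_N_y N0 x y hN0 hc) as h2N.
set (f0 := y0 + k*x0^2/4) in *.
assert (0 <= k*x0^2) by (apply Rmult_le_pos; lra). assert (hf0 : 1 - rho <= f0) by (unfold f0; lra). assert (hDdef : D = 2 - k) by reflexivity. clearbody f0 rho D.
assert (hA : 2*N0*f0 <= 2*N0^2 - x^2 + N0*k*x^2/2) by (rewrite <- hf; nra).
assert (hB : x^2*(1 - N0*k/2) <= 8*rho) by nra.
assert (hC : D/4 <= 1 - N0*k/2) by nra.
assert (hE : x^2 * D <= 32*rho) by nra.
assert (hxr : x^2 <= r^2).
{ assert (x^2 * D <= r^2 * D) by lra. apply (Rmult_le_reg_r D); lra. }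
assert (hyN : y <= N0).
{ destruct (Rle_or_lt y N0) as [e|e]; [exact e|]. exfalso. nra. }
assert (hyl : y*D >= (1-rho)*D - 8*k*rho).
{ assert (y = f0 - k*x^2/4) by lra. subst y. assert (k*(x^2*D) <= k*(32*rho)) by (apply Rmult_le_compat_l; lra). nra. }
assert (hyr : (1 - r)*D <= y*D).
{ assert (rho*(2+7*k) <= r*D) by nra. nra. }
repeat split.
- apply Rabs_le_between. split; nra.
- apply abs_of_sq; [lra|]. replace (x - 0) with x by ring. exact hxr.
- apply Rabs_le_between. split.
  + assert (1 - r <= y) by (apply (Rmult_le_reg_r D); lra). lra.
  + nra.
Qed.
Lemma core_iii (k Xs : R) : 2 < k -> Xs^2 = 1 - 4/k^2 -> Xs <> 0 -> core' k Xs (2/k).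
Proof.
intros hk hX2 hX0 r hr.
set (A := Rabs Xs).
assert (hA : 0 < A) by (apply Rabs_pos_lt; exact hX0).
assert (hA2 : A^2 = Xs^2) by (unfold A; rewrite RPow_abs; apply Rabs_right; apply Rle_ge, pow2_ge_0).
assert (hk4 : 0 < 4/k^2) by (apply Rdiv_lt_0_compat; nra).
assert (hA1 : A <= 1).
{ destruct (Rle_or_lt A 1) as [e|e]; [exact e|]. exfalso. nra. }
set (g := (k-2)^2/(4*k)).
assert (hg : 0 < g) by (unfold g; apply Rdiv_lt_0_compat; nra).
set (rho := Rmin (Rmin (Rmin 1 (r*A/(4*(1+k)))) (Rmin ((r*A)^2/144) (g/(2*(2+k))))) (Rmin (A/2) r)).
assert (hp : 0 < rho).
{ unfold rho. repeat apply Rmin_glb_lt; try lra; apply Rdiv_lt_0_compat; try lra; try nra.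
  apply pow_lt; apply Rmult_lt_0_compat; lra. }
assert (hb : rho <= 1 /\ rho <= r*A/(4*(1+k)) /\ rho <= (r*A)^2/144 /\ rho <= g/(2*(2+k)) /\ rho <= A/2 /\ rho <= r).
{ unfold rho.
  pose proof (Rmin_l (Rmin (Rmin 1 (r*A/(4*(1+k)))) (Rmin ((r*A)^2/144) (g/(2*(2+k))))) (Rmin (A/2) r)).
  pose proof (Rmin_r (Rmin (Rmin 1 (r*A/(4*(1+k)))) (Rmin ((r*A)^2/144) (g/(2*(2+k))))) (Rmin (A/2) r)).
  pose proof (Rmin_l (Rmin 1 (r*A/(4*(1+k)))) (Rmin ((r*A)^2/144) (g/(2*(2+k))))).
  pose proof (Rmin_r (Rmin 1 (r*A/(4*(1+k)))) (Rmin ((r*A)^2/144) (g/(2*(2+k))))).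
  pose proof (Rmin_l 1 (r*A/(4*(1+k)))). pose proof (Rmin_r 1 (r*A/(4*(1+k)))).
  pose proof (Rmin_l ((r*A)^2/144) (g/(2*(2+k)))). pose proof (Rmin_r ((r*A)^2/144) (g/(2*(2+k)))).
  pose proof (Rmin_l (A/2) r). pose proof (Rmin_r (A/2) r).
  repeat split; lra. }
destruct hb as [b1 [b2 [b3 [b4 [b5 b6]]]]].
assert (b2' : rho*(1+k) <= r*A/4).
{ apply (Rmult_le_compat_r (1+k)) in b2; [|lra]. replace (r*A/(4*(1+k))*(1+k)) with (r*A/4) in b2 by (field; lra). exact b2. }
assert (b3' : 9*rho <= (r*A/4)^2).
{ replace ((r*A/4)^2) with (9*((r*A)^2/144)) by field. lra. }
assert (b4' : rho*(2+k) < g).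
{ apply (Rmult_le_compat_r (2+k)) in b4; [|lra]. replace (g/(2*(2+k))*(2+k)) with (g/2) in b4 by (field; lra). lra. }
assert (hgdef : g = (k-2)^2/(4*k)) by reflexivity.
assert (hAdef : A = Rabs Xs) by reflexivity.
clearbody rho g A.
exists rho. split; [exact hp|].
intros N0 x0 y0 x y hN hx hy hc hf.
set (fs := 1/k + k/4).
assert (hfs1 : fs = 2/k + k*Xs^2/4) by (unfold fs; rewrite hX2; field; lra).
assert (hfsg : fs = 1 + g) by (rewrite hgdef; unfold fs; field; lra).
assert (hkX : k*Xs^2 = 4*(fs - 2/k)) by (rewrite hfs1; field; lra).
assert (hfsdef : fs = 1/k + k/4) by reflexivity. clearbody fs.
set (f0 := y0 + k*x0^2/4) in *. assert (hf0def : f0 = y0 + k*x0^2/4) by reflexivity. clearbody f0.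
assert (hx0X : Rabs (x0^2 - Xs^2) <= 3*rho).
{ apply Rabs_le_between in hx. assert (hXs1 : Xs^2 <= 1) by lra.
  assert (-1 <= Xs <= 1) by (split; nra).
  replace (x0^2 - Xs^2) with ((x0 - Xs)^2 + 2*Xs*(x0-Xs)) by ring.
  apply Rabs_le_between. split; nra. }
assert (hef : Rabs (f0 - fs) <= rho*(1+k)).
{ replace (f0 - fs) with ((y0 - 2/k) + k/4*(x0^2 - Xs^2)) by (rewrite hf0def, hfs1; field; lra).
  eapply Rle_trans. apply Rabs_triang. rewrite Rabs_mult, (Rabs_right (k/4)) by lra.
  assert (k/4*Rabs (x0^2 - Xs^2) <= k/4*(3*rho)) by (apply Rmult_le_compat_l; lra). nra. }
apply Rabs_le_between in hN.
assert (hN0 : 0 <= N0) by lra.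
assert (hN2 : N0^2 - 1 <= 3*rho) by nra.
assert (hxx : 0 <= x^2) by apply pow2_ge_0.
assert (hyk : k*(y - 2/k)^2/4 <= 3*k*rho/4 + rho*(1+k)).
{ replace (k*(y - 2/k)^2/4) with (k*y^2/4 - y + 1/k) by (field; lra).
  assert (k*x^2 <= k*(N0^2 - y^2)) by (apply Rmult_le_compat_l; lra).
  apply Rabs_le_between in hef.
  assert (k*N0^2/4 <= k/4 + 3*k*rho/4) by nra.
  rewrite hfsdef in *. nra. }
assert (hy2 : (y - 2/k)^2 <= 9*rho).
{ assert (k*(y-2/k)^2 <= k*(9*rho)) by nra. apply (Rmult_le_reg_l k); lra. }
assert (hyr : Rabs (y - 2/k) <= r*A/4) by (apply abs_of_sq; nra).
split.
{ left. intro e. subst x.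
  assert (hy0 : y = f0). { rewrite <- hf. field. }
  assert (y <= N0) by (destruct (Rle_or_lt y N0) as [e|e]; [exact e| exfalso; nra]).
  apply Rabs_le_between in hef. nra. }
split.
{ replace (x0*Xs) with (Xs^2 + (x0 - Xs)*Xs) by ring.
  assert (Rabs ((x0 - Xs)*Xs) <= rho*A) by (rewrite Rabs_mult; apply Rmult_le_compat; try apply Rabs_pos; lra).
  apply Rabs_le_between in H. nra. }
intros hs.
assert (hx2 : Rabs (x^2 - Xs^2) <= r*A).
{ assert (e : k*(x^2 - Xs^2) = 4*((f0 - fs) - (y - 2/k))) by (rewrite Rmult_minus_distr_l, hkX; lra).
  assert (Rabs (k*(x^2 - Xs^2)) <= 2*r*A).
  { rewrite e, Rabs_mult, (Rabs_right 4) by lra.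
    eapply Rle_trans. apply Rmult_le_compat_l. lra. apply Rabs_triang. rewrite Rabs_Ropp. lra. }
  rewrite Rabs_mult, (Rabs_right k) in H by lra.
  assert (0 < r*A) by (apply Rmult_lt_0_compat; lra). assert (2*r*A <= k*(r*A)) by nra. apply (Rmult_le_reg_l k); lra. }
assert (hsum : A <= Rabs (x + Xs)).
{ apply Rsqr_incr_0_var; [|apply Rabs_pos]. unfold Rsqr. rewrite <- Rabs_mult.
  replace (A*A) with (Xs^2) by (rewrite <- hA2; ring).
  rewrite Rabs_right by nra. nra. }
repeat split.
- apply Rabs_le_between; lra.
- assert (Rabs (x - Xs) * A <= r * A).
  { eapply Rle_trans. apply Rmult_le_compat_l. apply Rabs_pos. exact hsum.
    rewrite <- Rabs_mult. replace ((x - Xs)*(x+Xs)) with (x^2 - Xs^2) by ring. exact hx2. }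
  apply (Rmult_le_reg_r A); lra.
- nra.
Qed.
Lemma Cm1 : RtoC (-1) = Copp (RtoC 1).
Proof. unfold RtoC, Copp; simpl. apply injective_projections; simpl; ring. Qed.

Lemma spec_gen k w U0 U1 : (1+w-k*U0^2)*(1+w-k*U1^2) = 1 ->
  0 <= (1+w-k*U0^2)*((1+w-k*U0^2) - 2*k*U0^2) + (1+w-k*U1^2)*((1+w-k*U1^2) - 2*k*U1^2) + 2 ->
  spectrally_stable k w U0 U1.
Proof.
intros h1 h2 lam [v [[i [hi hv]] Hv]].
pose proof (Hv 0%nat ltac:(lia)) as H0. pose proof (Hv 1%nat ltac:(lia)) as H1.
pose proof (Hv 2%nat ltac:(lia)) as H2. pose proof (Hv 3%nat ltac:(lia)) as H3.
rewrite Lm00, Lm01, Lm02, Lm03 in H0. rewrite Lm10, Lm11, Lm12, Lm13 in H1.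
rewrite Lm20, Lm21, Lm22, Lm23 in H2. rewrite Lm30, Lm31, Lm32, Lm33 in H3.
apply (spec_core (1+w-k*U0^2) (1+w-k*U1^2) ((1+w-k*U0^2) - 2*k*U0^2) ((1+w-k*U1^2) - 2*k*U1^2)
   lam (v 0%nat) (v 1%nat) (v 2%nat) (v 3%nat) h1 h2).
- rewrite <- H0. rewrite Cm1. ring.
- rewrite <- H1. rewrite RtoC_opp. ring.
- rewrite <- H2. rewrite Cm1. ring.
- rewrite <- H3. rewrite RtoC_opp. ring.
- destruct i as [|[|[|[|i]]]]; try lia; auto.
Qed.

Lemma core_conv k U0 U1 Xs Ys : U0^2-U1^2 = Xs -> 2*U0*U1 = Ys -> core' k Xs Ys -> core_prop k U0 U1.
Proof. intros h1 h2 H. unfold core_prop. rewrite h1, h2. exact H. Qed.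

Lemma sq2 : (1/sqrt 2)^2 = 1/2.
Proof. assert (h : 0 < sqrt 2) by (apply sqrt_lt_R0; lra).
replace ((1/sqrt 2)^2) with (1/(sqrt 2 * sqrt 2)) by (field; lra). rewrite sqrt_sqrt by lra. reflexivity. Qed.

Lemma sq2' : (- (1/sqrt 2))^2 = 1/2.
Proof. replace ((- (1/sqrt 2))^2) with ((1/sqrt 2)^2) by ring. exact sq2. Qed.

Lemma prod2 : 2 * (1/sqrt 2) * (1/sqrt 2) = 1.
Proof. replace (2 * (1/sqrt 2) * (1/sqrt 2)) with (2*(1/sqrt 2)^2) by ring. rewrite sq2. field. Qed.

Lemma ab_facts k tau : 2 < k -> (tau = 1 \/ tau = -1) ->
  let al := alpha_tau k tau in let be := beta_tau k tau in
  al^2 + be^2 = 1 /\ al*be = 1/k /\ (al^2-be^2)^2 = 1 - 4/k^2 /\ al^2 - be^2 <> 0.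
Proof.
intros hk ht al be.
set (sp := sqrt (k+2)). set (sm := sqrt (k-2)). set (sk := sqrt k).
assert (hsp : sp*sp = k+2) by (apply sqrt_sqrt; lra).
assert (hsm : sm*sm = k-2) by (apply sqrt_sqrt; lra).
assert (hsk : sk*sk = k) by (apply sqrt_sqrt; lra).
assert (hsk0 : 0 < sk) by (apply sqrt_lt_R0; lra).
assert (hsp0 : 0 < sp) by (apply sqrt_lt_R0; lra).
assert (hsm0 : 0 < sm) by (apply sqrt_lt_R0; lra).
assert (ht2 : tau*tau = 1) by (destruct ht as [h|h]; rewrite h; ring).
assert (e1 : al^2+be^2 = (2*(sp*sp) + 2*(tau*tau)*(sm*sm))/(4*(sk*sk))) by (unfold al, be, alpha_tau, beta_tau; fold sp sm sk; field; lra).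
assert (e2 : al*be = ((sp*sp) - (tau*tau)*(sm*sm))/(4*(sk*sk))) by (unfold al, be, alpha_tau, beta_tau; fold sp sm sk; field; lra).
assert (e3 : al^2-be^2 = -(tau*sp*sm)/(sk*sk)) by (unfold al, be, alpha_tau, beta_tau; fold sp sm sk; field; lra).
rewrite hsp, hsm, hsk, ht2 in e1, e2. rewrite hsk in e3.
repeat split.
- rewrite e1. field. lra.
- rewrite e2. field. lra.
- rewrite e3. replace ((- (tau * sp * sm) / k) ^ 2) with ((tau*tau)*(sp*sp)*(sm*sm)/(k*k)) by (field; lra).
  rewrite ht2, hsp, hsm. field. lra.
- rewrite e3. intro h. assert (tau * sp * sm = 0).
  { apply (Rmult_eq_reg_r (/k)). rewrite Rmult_0_l. unfold Rdiv in h. lra. apply Rinv_neq_0_compat. lra. }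
  destruct ht; subst tau; nra.
Qed.

Theorem mainTheorem1 (kappa : R) (hk : 0 < kappa) :
  (spectrally_stable kappa (kappa / 2 - 2) (1 / sqrt 2) (- (1 / sqrt 2)) /\
   orbitally_stable kappa (1 / sqrt 2) (- (1 / sqrt 2))) /\
  (kappa < 2 ->
   spectrally_stable kappa (kappa / 2) (1 / sqrt 2) (1 / sqrt 2) /\
   orbitally_stable kappa (1 / sqrt 2) (1 / sqrt 2)) /\
  (2 < kappa -> forall tau : R, (tau = 1 \/ tau = -1) ->
   spectrally_stable kappa (kappa - 1) (alpha_tau kappa tau) (beta_tau kappa tau) /\
   orbitally_stable kappa (alpha_tau kappa tau) (beta_tau kappa tau)).
Proof.
split; [|split].
- split.
  + apply spec_gen; rewrite sq2, sq2'; nra.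
  + apply orb_generic. { rewrite sq2, sq2'; lra. }
    apply (core_conv _ _ _ 0 (-1)).
    * rewrite sq2, sq2'; ring.
    * replace (2 * (1 / sqrt 2) * - (1 / sqrt 2)) with (- (2 * (1 / sqrt 2) * (1 / sqrt 2))) by ring.
      rewrite prod2. reflexivity.
    * apply core_i; exact hk.
- intros hk2. split.
  + apply spec_gen; rewrite sq2; nra.
  + apply orb_generic. { rewrite sq2; lra. }
    apply (core_conv _ _ _ 0 1).
    * ring.
    * exact prod2.
    * apply core_ii; assumption.
- intros hk2 tau ht.
  destruct (ab_facts kappa tau hk2 ht) as [f1 [f2 [f3 f4]]].
  set (al := alpha_tau kappa tau) in *. set (be := beta_tau kappa tau) in *.
  split.
  + apply spec_gen.
    * replace ((1 + (kappa - 1) - kappa * al ^ 2) * (1 + (kappa - 1) - kappa * be ^ 2))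
        with (kappa^2*(al*be)^2 + kappa^2*(1 - (al^2+be^2))) by ring.
      rewrite f1, f2. field. lra.
    * replace ((1 + (kappa - 1) - kappa * al ^ 2) * (1 + (kappa - 1) - kappa * al ^ 2 - 2 * kappa * al ^ 2) +
        (1 + (kappa - 1) - kappa * be ^ 2) * (1 + (kappa - 1) - kappa * be ^ 2 - 2 * kappa * be ^ 2) + 2)
        with (kappa^2*((al^2+be^2)^2 - 6*(al*be)^2) + 2 + kappa^2*(1 - (al^2+be^2))*(2 - 2*(al^2+be^2)) ) by ring.
      rewrite f1, f2. replace (kappa ^ 2 * (1 ^ 2 - 6 * (1 / kappa) ^ 2) + 2 + kappa ^ 2 * (1 - 1) * (2 - 2 * 1))
        with (kappa^2 - 4) by (field; lra). nra.
  + apply orb_generic; [exact f1|].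
    apply (core_conv _ _ _ (al^2-be^2) (2/kappa)).
    * reflexivity.
    * replace (2*al*be) with (2*(al*be)) by ring. rewrite f2. field. lra.
    * apply core_iii; [exact hk2| exact f3| exact f4].
Qed.
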